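(* Let $\mathcal{X}=\{1,\dots,n\}$, let $\pi$ be a strictly positive probability distribution on $\mathcal{X}$, let $P$ be a $\pi$-reversible transition matrix, let $G$ be the Gibbs kernel induced by some partition of $\mathcal{X}$, and let $A_\alpha=\alpha P+(1-\alpha)G$. Then for every integer $l\geq2$ and every $\alpha\in(0,1)$, $$\|A_\alpha^l-\Pi\|_{F,\pi}^2\leq(n-1)(1-\alpha\gamma^*(P))^{2l}.$$
   Context: $\pi$-reversible means $\pi(x)P(x,y)=\pi(y)P(y,x)$. Gibbs kernel of a partition $\bigsqcup_i\mathcal{O}_i$: $G(x,y)=\pi(y)/\pi(\mathcal{O}(x))$ if $y\in\mathcal{O}(x)$ and $0$ otherwise. $\Pi$ is the matrix with every row equal to $\pi$; $\|M\|_{F,\pi}^2=\operatorname{Tr}(M^*M)$ with $M^*(x,y)=\pi(y)M(y,x)/\pi(x)$. For $\pi$-reversible $P$ with eigenvalues $\lambda_1\ge\dots\ge\lambda_n$, $\gamma^*(P)=1-\max\{|\lambda_2(P)|,|\lambda_n(P)|\}$. *)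

(* Defs.v *)
From HB Require Import structures.
From mathcomp Require Import all_boot all_order all_algebra.
Set Implicit Arguments. Unset Strict Implicit. Unset Printing Implicit Defensive.
Import Order.TTheory GRing.Theory Num.Theory.
Local Open Scope ring_scope.

Section Defs.
Variables (R : rcfType) (n : nat).

Definition pos_prob (pi : 'I_n -> R) : Prop :=
  (forall x, 0 < pi x) /\ \sum_x pi x = 1.

Definition stochastic (P : 'M[R]_n) : Prop :=
  (forall x y, 0 <= P x y) /\ (forall x, \sum_y P x y = 1).

Definition reversible (pi : 'I_n -> R) (P : 'M[R]_n) : Prop :=
  forall x y, pi x * P x y = pi y * P y x.

Definition gibbs (pi : 'I_n -> R) (Ps : {set {set 'I_n}}) : 'M[R]_n :=
  \matrix_(x, y) (if y \in pblock Ps x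
                  then pi y / \sum_(z in pblock Ps x) pi z else 0).

Definition Pimx (pi : 'I_n -> R) : 'M[R]_n := \matrix_(x, y) pi y.

Definition adj_pi (pi : 'I_n -> R) (M : 'M[R]_n) : 'M[R]_n :=
  \matrix_(x, y) (pi y * M y x / pi x).

Definition frob2 (pi : 'I_n -> R) (M : 'M[R]_n) : R := \tr (adj_pi pi M *m M).

(* matrix power (valid for every n) *)
Definition mxpow (M : 'M[R]_n) (l : nat) : 'M[R]_n := iter l (mulmx M) 1%:M.

Definition eig_list (P : 'M[R]_n) (s : seq R) : Prop :=
  sorted (fun a b : R => b <= a) s /\
  char_poly P = \prod_(a <- s) ('X - a%:P).

(* gamma^*(P) = 1 - max(|lambda_2|, |lambda_n|), for the sorted eigenvalue list s *)
Definition gamma_star (s : seq R) : R :=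
  1 - Num.max `|s`_1| `|s`_(n.-1)|.
End Defs.

(* Main.v *)
Require Import Defs.
From HB Require Import structures.
From mathcomp Require Import all_boot all_order all_algebra.
From mathcomp Require Import complex.
From mathcomp Require Import ring lra.
Set Implicit Arguments. Unset Strict Implicit. Unset Printing Implicit Defensive.
Import Order.TTheory GRing.Theory Num.Theory.
Local Open Scope ring_scope.

Lemma char_poly_conj (F : comNzRingType) n (A V W : 'M[F]_n) :
  V *m W = 1%:M -> char_poly (W *m A *m V) = char_poly A.
Proof.
move=> VW.
have VW' : map_mx polyC V *m map_mx polyC W = 1%:M.
  by rewrite -map_mxM VW map_mx1.
rewrite /char_poly.
have -> : char_poly_mx (W *m A *m V) =
   map_mx polyC W *m char_poly_mx A *m map_mx polyC V.
  rewrite /char_poly_mx !map_mxM mulmxBr mulmxBl.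
  congr (_ - _).
  have WV : map_mx polyC W *m map_mx polyC V = 1%:M by apply: mulmx1C.
  by rewrite mul_mx_scalar -scalemxAl WV scalemx1.
rewrite !det_mulmx mulrC mulrA -det_mulmx VW' det1 mul1r //.
Qed.

Section Spec.
Variable R : rcfType.
Local Notation C := (R[i]).
Local Notation f := (real_complex R).

Definition nrm2 n (v : 'rV[R]_n) := \sum_i v 0 i ^+ 2.
Definition nC n (x : 'rV[C]_n) := \sum_i `|x 0 i| ^+ 2.

Local Open Scope sesquilinear_scope.

Lemma nC_mx n (x : 'rV[C]_n) : nC x = (x *m x^t*) 0 0.
Proof.
rewrite /nC !mxE; apply: eq_bigr => i _; rewrite !mxE normCK //.
Qed.

Lemma nC_unit n (x : 'rV[C]_n) (U : 'M[C]_n) : U *m U^t* = 1%:M ->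
  nC (x *m U) = nC x.
Proof.
move=> UU; rewrite !nC_mx trmx_mul map_mxM mulmxA -(mulmxA x) UU mulmx1 //.
Qed.

Lemma f_real (a : R) : f a \is Num.real.
Proof. by rewrite complex_real. Qed.

Lemma conj_f (a : R) : (f a)^* = f a.
Proof. exact/conj_Creal/f_real. Qed.

Lemma norm_f (a : R) : `|f a| = f `|a|.
Proof.
rewrite normc_def /=; congr (_%:C)%C.
by rewrite expr0n /= addr0 sqrtr_sqr.
Qed.

Lemma nC_f n (x : 'rV[R]_n) : nC (map_mx f x) = f (nrm2 x).
Proof.
rewrite /nC /nrm2 rmorph_sum; apply: eq_bigr => i _.
by rewrite mxE norm_f -rmorphXn /= real_normK ?num_real.
Qed.

Lemma spec_bound n (S : 'M[R]_n) (u : 'rV[R]_n) (s : seq R) (rho : R) :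
  S^T = S -> u *m S = u -> u != 0 ->
  char_poly S = \prod_(a <- s) ('X - a%:P) ->
  (forall a, a \in s -> `|a| <= 1) ->
  (count (fun a : R => (rho < `|a|)%R) s <= 1)%N ->
  forall v : 'rV[R]_n, v *m u^T = 0 -> nrm2 (v *m S) <= rho ^+ 2 * nrm2 v.
Proof.
move=> Ssym uS u0 chS s1 cnt v vu.
pose SC := map_mx f S.
have SCt : SC^t* = SC.
  apply/matrixP => i j; rewrite !mxE conj_f.
  by rewrite -[in RHS]Ssym mxE.
have SCn : SC \is normalmx by apply/normalmxP; rewrite SCt.
pose U := spectralmx SC; pose d := spectral_diag SC.
have Uu : U \is unitarymx := spectral_unitarymx SC.
have UUt : U *m U^t* = 1%:M by apply/unitarymxP.
have UtU : U^t* *m U = 1%:M by apply: mulmx1C.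
have SCE : SC = U^t* *m diag_mx d *m U.
  by rewrite {1}(orthomx_spectralP SCn) invmx_unitary.
have chD : char_poly (diag_mx d) = \prod_(b <- map f s) ('X - b%:P).
  rewrite -(char_poly_conj (diag_mx d) UUt) -SCE -map_char_poly chS.
  rewrite rmorph_prod big_map; apply: eq_bigr => a _.
  by rewrite rmorphB /= map_polyX map_polyC.
have perm : perm_eq [seq d 0 i | i <- enum 'I_n] (map f s).
  apply: prod_XsubC_eq; rewrite big_map -chD char_poly_trig ?diag_mx_is_trig //.
  rewrite big_enum /=; apply: eq_bigr => i _; rewrite mxE eqxx mulr1n //.
have dreal : forall i, exists2 a, a \in s & d 0 i = f a.
  move=> i; have : d 0 i \in map f s by rewrite -(perm_mem perm) map_f ?mem_enum.
  by case/mapP=> a ??; exists a.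
pose vC := map_mx f v; pose uC := map_mx f u.
pose w := vC *m U^t*; pose z := uC *m U^t*.
have wU : w *m U = vC by rewrite /w -mulmxA UtU mulmx1.
have zU : z *m U = uC by rewrite /z -mulmxA UtU mulmx1.
have zD : z *m diag_mx d = z.
  have : uC *m SC = uC by rewrite -map_mxM uS.
  rewrite SCE !mulmxA => h.
  by rewrite /z -[LHS]mulmx1 -UUt mulmxA h.
have wz : w *m z^t* = 0.
  rewrite /w /z trmx_mul map_mxM trmxCK mulmxA -(mulmxA vC) UtU mulmx1.
  have -> : uC^t* = map_mx f u^T.
    by apply/matrixP => i j; rewrite !mxE conj_f.
  by rewrite -map_mxM vu map_mx0.
clearbody w z.
pose dl := [seq d 0 i | i <- enum 'I_n].
have cntC : (count (fun x : C => ~~ (`|x| <= f rho)%R) dl <= 1)%N.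
  rewrite (permP perm) count_map; apply: leq_trans cnt; apply: sub_count => a /=.
  by rewrite norm_f lecR ltNge.
have key : forall i, w 0 i = 0 \/ `|d 0 i| <= f rho.
  move=> i; case: (boolP (`|d 0 i| <= f rho)) => [h|h]; [by right| left].
  have others : forall j, j != i -> `|d 0 j| <= f rho.
    move=> j ji; apply/negPn/negP => hj.
    have : (2 <= count (fun x : C => ~~ (`|x| <= f rho)%R) dl)%N.
      rewrite /dl count_map -sum1_count enumT (bigD1 i) ?h //= (bigD1 j) /= ?hj ?ji //.
    by move/leq_trans/(_ cntC).
  have [a ains da] := dreal i.
  have rho1 : rho < 1.
    move: h; rewrite da norm_f lecR -ltNge => h.
    by apply: (lt_le_trans h); apply: s1.
  have zj : forall j, j != i -> z 0 j = 0.
    move=> j ji; have [b bins db] := dreal j.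
    have := others j ji; rewrite db norm_f lecR => hb.
    have b1 : b != 1.
      apply/eqP => b1; move: hb; rewrite b1 normr1 => hb.
      by move: (le_lt_trans hb rho1); rewrite ltxx.
    have e : (z *m diag_mx d) 0 j = z 0 j by rewrite zD.
    move: e; rewrite mul_mx_diag mxE db => e.
    have : z 0 j * (f b - 1) = 0 by rewrite mulrBr mulr1 e subrr.
    move/eqP; rewrite mulf_eq0 subr_eq0 => /orP [/eqP //|].
    by rewrite -(rmorph1 f) (inj_eq (@complexI R)) (negbTE b1).
  have zi : z 0 i != 0.
    apply/negP => /eqP zi0; move: u0; apply/negP; rewrite negbK.
    have z0 : z = 0.
      apply/rowP => j; rewrite [in RHS]mxE; case: (eqVneq j i) => [->|ji]; first exact: zi0.
      exact: zj.
    by move: zU; rewrite z0 mul0mx => /esym/eqP; rewrite map_mx_eq0.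
  have e : (w *m z^t*) 0 0 = 0 by rewrite wz mxE.
  move: e; rewrite !mxE (bigD1 i) //= big1.
    rewrite addr0 !mxE => /eqP; rewrite mulf_eq0 conjC_eq0 (negbTE zi) orbF.
    by move/eqP.
  by move=> j ji; rewrite !mxE zj // conjC0 mulr0.
have : f (nrm2 (v *m S)) <= f (rho ^+ 2 * nrm2 v).
  rewrite -nC_f map_mxM -/SC -/vC -wU SCE !mulmxA -(mulmxA w) UUt mulmx1 nC_unit //.
  rewrite rmorphM /= -nC_f -/vC -wU (nC_unit w UUt) /nC mulr_sumr.
  apply: ler_sum => j _; rewrite mul_mx_diag mxE normrM exprMn mulrC.
  case: (key j) => [->|hj]; first by rewrite normr0 expr0n /= !mulr0.
  apply: ler_wpM2r; first by rewrite exprn_ge0.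
  have [b _ db] := dreal j; move: hj; rewrite db norm_f lecR => hj.
  rewrite -rmorphXn lecR; apply: lerXn2r; rewrite ?nnegrE //.
  exact: le_trans hj.
by rewrite lecR.
Qed.
End Spec.

Section Vec.
Variable R : rcfType.
Variable n : nat.
Implicit Types a b v : 'rV[R]_n.

Definition dot a b := \sum_i a 0 i * b 0 i.

Lemma nrm2_dot a : nrm2 a = dot a a.
Proof. by apply: eq_bigr => i _; rewrite expr2. Qed.

Lemma dot_mx a b : (a *m b^T) 0 0 = dot a b.
Proof. by rewrite mxE; apply: eq_bigr => i _; rewrite mxE. Qed.

Lemma dotC a b : dot a b = dot b a.
Proof. by apply: eq_bigr => i _; rewrite mulrC. Qed.

Lemma nrm2_ge0 a : 0 <= nrm2 a.
Proof. by apply: sumr_ge0 => i _; rewrite sqr_ge0. Qed.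

Lemma nrm2_comb p q a b :
  nrm2 (p *: a + q *: b) = p ^+ 2 * nrm2 a + 2 * p * q * dot a b + q ^+ 2 * nrm2 b.
Proof.
rewrite /nrm2 /dot !mulr_sumr -!big_split; apply: eq_bigr => i _; rewrite !mxE /=.
ring.
Qed.

Lemma dot_comb p q a b c :
  dot (p *: a + q *: b) c = p * dot a c + q * dot b c.
Proof.
rewrite /dot !mulr_sumr -!big_split; apply: eq_bigr => i _; rewrite !mxE /=.
ring.
Qed.

Lemma nrm2_eq0 a : nrm2 a = 0 -> a = 0.
Proof.
move/eqP; rewrite psumr_eq0 => [/allP h|i _]; last by rewrite sqr_ge0.
apply/rowP => i; rewrite mxE; apply/eqP; rewrite -sqrf_eq0.
by apply: h; rewrite mem_index_enum.
Qed.

Lemma nrm2_tri a b x y N : 0 <= x -> 0 <= y ->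
  nrm2 a <= x ^+ 2 * N -> nrm2 b <= y ^+ 2 * N ->
  nrm2 (a + b) <= (x + y) ^+ 2 * N.
Proof.
move=> x0 y0 ha hb.
have na0 := nrm2_ge0 a; have nb0 := nrm2_ge0 b.
have hd : dot a b <= x * y * N.
  have := nrm2_ge0 (y *: a + (- x) *: b); rewrite nrm2_comb => hq.
  have [x0'|xn0] := eqVneq x 0.
    have : nrm2 a = 0 by apply/le_anti; rewrite na0 andbT; move: ha; rewrite x0' expr0n /= mul0r.
    move/nrm2_eq0 => ->; rewrite /dot big1 => [|i _]; last by rewrite mxE mul0r.
    by rewrite x0' !mul0r.
  have [y0'|yn0] := eqVneq y 0.
    have : nrm2 b = 0 by apply/le_anti; rewrite nb0 andbT; move: hb; rewrite y0' expr0n /= mul0r.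
    move/nrm2_eq0 => ->; rewrite /dot big1 => [|i _]; last by rewrite mxE mulr0.
    by rewrite y0' mulr0 mul0r.
  have xp : 0 < x by rewrite lt_def xn0.
  have yp : 0 < y by rewrite lt_def yn0.
  have x2 : 0 < x ^+ 2 by apply: exprn_gt0.
  have N0 : 0 <= N by rewrite -(pmulr_rge0 _ x2); apply: le_trans ha.
  have e1 : y ^+ 2 * nrm2 a <= y ^+ 2 * (x ^+ 2 * N).
    by apply: ler_wpM2l => //; apply: sqr_ge0.
  have e2 : x ^+ 2 * nrm2 b <= x ^+ 2 * (y ^+ 2 * N).
    by apply: ler_wpM2l => //; apply: sqr_ge0.
  have h1 : (2 * (x * y)) * dot a b <= (2 * (x * y)) * (x * y * N).
    rewrite sqrrN in hq; nra.
  by rewrite ler_pM2l // in h1; rewrite mulr_gt0 // mulr_gt0.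
have := nrm2_comb 1 1 a b; rewrite !scale1r => ->.
nra.
Qed.
End Vec.

Section Markov.
Variable R : rcfType.
Variable n : nat.
Variable pi : 'I_n -> R.
Hypothesis pipos : forall x, 0 < pi x.

Definition q x := Num.sqrt (pi x).
Lemma q_gt0 x : 0 < q x. Proof. by rewrite /q sqrtr_gt0. Qed.
Lemma q_neq0 x : q x != 0. Proof. by rewrite gt_eqF // q_gt0. Qed.
Lemma qq x : q x ^+ 2 = pi x. Proof. by rewrite /q sqr_sqrtr // ltW. Qed.

Definition phi (M : 'M[R]_n) : 'M[R]_n := \matrix_(x, y) (q x * M x y / q y).

Lemma phiM M N : phi (M *m N) = phi M *m phi N.
Proof.
apply/matrixP => x z; rewrite !mxE mulr_sumr mulr_suml; apply: eq_bigr => y _.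
rewrite !mxE; have := q_neq0 y; have := q_neq0 z; move=> h1 h2; field.
by rewrite h1 h2.
Qed.

Lemma phi1 : phi 1%:M = 1%:M.
Proof.
apply/matrixP => x y; rewrite !mxE; case: eqP => [->|_] /=.
  by rewrite mulr1 divff // q_neq0.
by rewrite mulr0 mul0r.
Qed.

Lemma phiB M N : phi (M - N) = phi M - phi N.
Proof. by apply/matrixP => x y; rewrite !mxE mulrBr mulrBl. Qed.

Lemma phi_comb a b M N : phi (a *: M + b *: N) = a *: phi M + b *: phi N.
Proof. apply/matrixP => x y; rewrite !mxE; have := q_neq0 y => h; field. by rewrite h. Qed.

Lemma phi_pow M l : phi (mxpow M l) = mxpow (phi M) l.
Proof.
elim: l => [|l IH]; first exact: phi1.
by rewrite /mxpow /= -/(mxpow M l) -/(mxpow (phi M) l) phiM IH.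
Qed.

Definition uu : 'rV[R]_n := \row_x q x.

Lemma nrm2_uu : \sum_x pi x = 1 -> nrm2 uu = 1.
Proof. by move=> <-; apply: eq_bigr => x _; rewrite mxE qq. Qed.

Lemma phi_Pi : phi (Pimx pi) = uu^T *m uu.
Proof.
apply/matrixP => x y; rewrite !mxE big_ord1 !mxE -(qq y) expr2.
have := q_neq0 y => h; field; by rewrite h.
Qed.

Lemma phi_sym M : reversible pi M -> (phi M)^T = phi M.
Proof.
move=> rev; apply/matrixP => x y; rewrite !mxE.
have e : M x y = q y ^+ 2 * M y x / q x ^+ 2.
  by rewrite !qq -rev mulrC mulKf // gt_eqF.
rewrite e; have := q_neq0 y; have := q_neq0 x => h1 h2; field.
by rewrite h1 h2.
Qed.

Lemma phi_uu M : reversible pi M -> (forall x, \sum_y M x y = 1) -> uu *m phi M = uu.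
Proof.
move=> rev st; apply/rowP => y; rewrite !mxE.
transitivity ((\sum_x pi y * M y x) / q y).
  rewrite mulr_suml; apply: eq_bigr => x _; rewrite !mxE -rev -(qq x) expr2 !mulrA //.
by rewrite -mulr_sumr st mulr1 -(qq y) expr2 mulfK // q_neq0.
Qed.

Lemma frob2E M : frob2 pi M = \sum_y nrm2 (row y (phi M)).
Proof.
rewrite /frob2 /mxtrace /nrm2.
under eq_bigr => x _ do rewrite mxE.
rewrite exchange_big /=; apply: eq_bigr => y _; apply: eq_bigr => x _.
rewrite !mxE -(qq x) -(qq y).
have := q_neq0 x; have := q_neq0 y => h1 h2; field; by rewrite ?h1 ?h2.
Qed.


Lemma phi_conj M : char_poly (phi M) = char_poly M.
Proof.
pose qr : 'rV[R]_n := \row_x q x; pose qi : 'rV[R]_n := \row_x (q x)^-1.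
have -> : phi M = diag_mx qr *m M *m diag_mx qi.
  by apply/matrixP => x y; rewrite mul_mx_diag mul_diag_mx !mxE.
apply: char_poly_conj; apply/matrixP => x y; rewrite mul_diag_mx !mxE.
case: eqP => [->|_]; last by rewrite mulr0.
by rewrite /= mulr1n mulVf // q_neq0.
Qed.

Lemma gibbs_props Ps : partition Ps [set: 'I_n] ->
  [/\ reversible pi (gibbs pi Ps), (forall x, \sum_y gibbs pi Ps x y = 1)
    & gibbs pi Ps *m gibbs pi Ps = gibbs pi Ps].
Proof.
move=> /and3P [/eqP cov tI _].
have inB : forall x, x \in pblock Ps x by move=> x; rewrite mem_pblock cov inE.
have symB : forall x y, y \in pblock Ps x -> pblock Ps y = pblock Ps x.
  by move=> x y h; apply: same_pblock.
have Zpos : forall x, 0 < \sum_(z in pblock Ps x) pi z.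
  move=> x; rewrite (bigD1 x) ?inB //=; apply: ltr_wpDr; last exact: pipos.
  by apply: sumr_ge0 => i _; apply: ltW.
have rows : forall x, \sum_y gibbs pi Ps x y = 1.
  move=> x; transitivity (\sum_(y in pblock Ps x) pi y / \sum_(z in pblock Ps x) pi z).
    by rewrite [RHS]big_mkcond /=; apply: eq_bigr => y _; rewrite mxE.
  by rewrite -mulr_suml divff // gt_eqF.
split => //.
- move=> x y; rewrite !mxE; case: (boolP (y \in pblock Ps x)) => h.
    have hx : x \in pblock Ps y by rewrite (symB _ _ h) inB.
    by rewrite hx (symB _ _ h) !mulrA [pi x * pi y]mulrC.
  have hx : x \notin pblock Ps y.
    by apply/negP => hx; move: h; rewrite (symB _ _ hx) inB.
  by rewrite (negbTE hx) !mulr0.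
- apply/matrixP => x z; rewrite !mxE.
  transitivity (\sum_y gibbs pi Ps x y * gibbs pi Ps x z).
    apply: eq_bigr => y _; case: (boolP (y \in pblock Ps x)) => h.
      by rewrite [gibbs _ _ y z]mxE [gibbs _ _ x z]mxE (symB _ _ h).
    by rewrite [gibbs _ _ x y]mxE (negbTE h) !mul0r.
  by rewrite -mulr_suml rows mul1r mxE.
Qed.

End Markov.

Lemma mxpow_sub (R : rcfType) n (K E : 'M[R]_n) l :
  K *m E = E -> E *m K = E -> E *m E = E -> (0 < l)%N ->
  mxpow K l - E = mxpow (K - E) l.
Proof.
move=> KE EK EE; case: l => // l _.
have EKl : forall l, E *m mxpow K l = E.
  elim=> [|k IH]; first by rewrite /mxpow /= mulmx1.
  have -> : mxpow K k.+1 = K *m mxpow K k by [].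
  by rewrite mulmxA EK IH.
elim: l => [|l IH]; first by rewrite /mxpow /= !mulmx1.
have -> : mxpow (K - E) l.+2 = (K - E) *m mxpow (K - E) l.+1 by [].
have -> : mxpow K l.+2 = K *m mxpow K l.+1 by [].
rewrite -IH mulmxBl !mulmxBr KE EKl EE.
by rewrite subrr subr0.
Qed.

Lemma eig_le1 (R : rcfType) n (P : 'M[R]_n) a : stochastic P ->
  root (char_poly P) a -> `|a| <= 1.
Proof.
move=> [Pge0 Psum]; rewrite -eigenvalue_root_char => /eigenvalueP [v vP v0].
pose sv := \sum_y `|v 0 y|.
have sv0 : 0 < sv.
  rewrite lt_def (sumr_ge0 _ (fun i _ => normr_ge0 _)) andbT.
  apply/negP => /eqP /psumr_eq0P h; move: v0; apply/negP; rewrite negbK.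
  apply/eqP/rowP => y; rewrite mxE; apply/normr0_eq0; apply: h => //.
have : `|a| * sv <= 1 * sv.
  rewrite mul1r /sv mulr_sumr.
  apply: (@le_trans _ _ (\sum_y \sum_x `|v 0 x| * P x y)).
    apply: ler_sum => y _; rewrite -normrM.
    have -> : a * v 0 y = (v *m P) 0 y by rewrite vP mxE.
    rewrite mxE; apply: le_trans (ler_norm_sum _ _ _) _.
    by apply: ler_sum => x _; rewrite normrM (ger0_norm (Pge0 x y)).
  rewrite exchange_big /=; apply: ler_sum => x _.
  by rewrite -mulr_sumr Psum mulr1.
by rewrite ler_pM2r.
Qed.

Lemma count_big (R : rcfType) (s : seq R) m :
  sorted (fun a b : R => b <= a) s -> size s = m ->
  (count (fun a : R => (Num.max `|s`_1| `|s`_(m.-1)| < `|a|)%R) s <= 1)%N.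
Proof.
move=> srt sz.
have tr : transitive (fun a b : R => b <= a).
  by move=> y x z h1 h2; apply: le_trans h2 h1.
have hx : forall k, (0 < k < m)%N -> `|s`_k| <= Num.max `|s`_1| `|s`_(m.-1)|.
  move=> k /andP [k0 km].
  have hom := sorted_leq_nth tr (fun x => lexx x) 0 srt.
  have h1 : s`_k <= s`_1.
    by apply: (hom 1%N k); rewrite ?inE ?sz // (leq_ltn_trans _ km).
  have h2 : s`_(m.-1) <= s`_k.
    apply: (hom k m.-1); rewrite ?inE ?sz //; first by case: (m) km.
    by case: (m) km.
  rewrite le_max; have [x0|x0] := leP 0 s`_k.
    by apply/orP; left; rewrite ger0_norm //; apply: le_trans (ler_norm _).
  apply/orP; right; rewrite ltr0_norm //; apply: le_trans (_ : - s`_(m.-1) <= _).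
    by rewrite lerN2.
  by rewrite -normrN ler_norm.
case Es: s sz hx => [|a0 t] //= sz hx.
rewrite -[X in (_ <= X)%N]addn0 leq_add ?leq_b1 // leqn0 -/(nat_of_bool true) eqn0Ngt -has_count.
apply/hasPn => x xt; rewrite -leNgt.
have := hx (index x t).+1; rewrite /= nth_index //; apply.
by rewrite -sz ltnS index_mem.
Qed.


Lemma nrm2Z (R : rcfType) n (k : R) (a : 'rV[R]_n) : nrm2 (k *: a) = k ^+ 2 * nrm2 a.
Proof. by rewrite /nrm2 mulr_sumr; apply: eq_bigr => i _; rewrite mxE exprMn. Qed.

Lemma dot0_mx (R : rcfType) n (a b : 'rV[R]_n) : dot a b = 0 -> a *m b^T = 0.
Proof. by move=> h; apply/matrixP => i j; rewrite !ord1 dot_mx h mxE. Qed.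

Lemma proj_bound (R : rcfType) n (H : 'M[R]_n) (w : 'rV[R]_n) :
  H^T = H -> H *m H = H -> nrm2 (w *m H) <= nrm2 w.
Proof.
move=> Hs HH.
have e : dot w (w *m H) = nrm2 (w *m H).
  by rewrite nrm2_dot -!dot_mx trmx_mul Hs -(mulmxA w) (mulmxA H) HH.
have := nrm2_ge0 (1 *: w + (-1) *: (w *m H)); rewrite nrm2_comb e.
rewrite expr1n !mul1r sqrrN expr1n mul1r; lra.
Qed.

Unset Implicit Arguments.

Theorem corollary4p12 (R : rcfType) (n : nat) (pi : 'I_n -> R)
    (P : 'M[R]_n) (Ps : {set {set 'I_n}}) (s : seq R) :
  pos_prob pi -> stochastic P -> reversible pi P ->
  partition Ps [set: 'I_n] ->
  eig_list P s ->
  forall (l : nat) (alpha : R), (2 <= l)%N -> 0 < alpha < 1 ->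
  frob2 pi (mxpow (alpha *: P + (1 - alpha) *: gibbs pi Ps) l - Pimx pi)
    <= (n - 1)%:R * (1 - alpha * gamma_star n s) ^+ (2 * l).
Proof.
move=> [pipos psum] hP Prev hpart [srt chP] l alpha hl /andP [a0 a1].
have [Pge0 Psum] := hP.
have [Grev Gsum GG] := gibbs_props pipos hpart.
set G := gibbs pi Ps in Grev Gsum GG *.
set rho := Num.max `|s`_1| `|s`_(n.-1)|.
have rho0 : 0 <= rho by rewrite le_max normr_ge0.
set c := alpha * rho + (1 - alpha).
have cE : 1 - alpha * gamma_star n s = c by rewrite /gamma_star /c -/rho; ring.
rewrite cE.
set S := phi pi P; set H := phi pi G; set u := uu pi.
have uS : u *m S = u by apply: phi_uu.
have uH : u *m H = u by apply: phi_uu.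
have Ss : S^T = S by apply: phi_sym.
have Hs : H^T = H by apply: phi_sym.
have HH : H *m H = H by rewrite /H -phiM // GG.
have nu : nrm2 u = 1 by apply: nrm2_uu.
have uu1 : u *m u^T = 1%:M.
  by apply/matrixP => i j; rewrite !ord1 dot_mx -nrm2_dot nu mxE.
have u0 : u != 0.
  apply/eqP => u0; move: nu; rewrite u0 /nrm2 big1 => [|i _]; last by rewrite mxE expr0n.
  by move/eqP; rewrite eq_sym oner_eq0.
have n0 : (0 < n)%N.
  rewrite lt0n; apply/eqP => n0'.
  move: psum; rewrite big1 => [|x _]; first by move/eqP; rewrite eq_sym oner_eq0.
  by have := ltn_ord x; rewrite [X in (_ < X)%N]n0'.
have sz : size s = n.
  by have := size_char_poly P; rewrite chP size_prod_XsubC => -[].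
have Sb : forall v, v *m u^T = 0 -> nrm2 (v *m S) <= rho ^+ 2 * nrm2 v.
  apply: (spec_bound (s := s)) => //.
  - by rewrite /S phi_conj.
  - by move=> a ains; apply: (eig_le1 hP); rewrite chP root_prod_XsubC.
  - exact: count_big.
set K := alpha *: S + (1 - alpha) *: H.
have Ks : K^T = K by rewrite /K linearD !linearZ /= Ss Hs.
have uK : u *m K = u.
  by rewrite mulmxDr -!scalemxAr uS uH -scalerDl addrC subrK scale1r.
set E := u^T *m u.
have KE : K *m E = E.
  have Ku : K *m u^T = u^T by rewrite -[K]Ks -trmx_mul uK.
  by rewrite /E mulmxA Ku.
have EK : E *m K = E by rewrite /E -mulmxA uK.
have EE : E *m E = E by rewrite /E mulmxA -(mulmxA u^T) uu1 mulmx1.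
set T := K - E.
have l0 : (0 < l)%N by apply: leq_trans hl.
have phiA : phi pi (mxpow (alpha *: P + (1 - alpha) *: G) l - Pimx pi) = mxpow T l.
  rewrite phiB (phi_pow pipos) (phi_comb pipos) (phi_Pi pipos) -/S -/H -/K -/u -/E.
  exact: mxpow_sub.
rewrite (frob2E pipos) phiA.
have uT : u *m T = 0 by rewrite mulmxBr uK /E mulmxA uu1 mul1mx subrr.
have uTl : forall k, (0 < k)%N -> u *m mxpow T k = 0.
  case=> // k _; have -> : mxpow T k.+1 = T *m mxpow T k by [].
  by rewrite mulmxA uT mul0mx.
have Tb : forall v, nrm2 (v *m T) <= c ^+ 2 * nrm2 v.
  move=> v; set t := dot v u; set v' := v - t *: u.
  have v'u : dot v' u = 0.
    have e := dot_comb 1 (- t) v u u.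
    by rewrite scale1r scaleNr -nrm2_dot nu mul1r mulr1 -/t addrN in e.
  have vT : v *m T = v' *m T by rewrite /v' mulmxBl -scalemxAl uT scaler0 subr0.
  have v'T : v' *m T = alpha *: (v' *m S) + (1 - alpha) *: (v' *m H).
    by rewrite mulmxBr /E mulmxA (dot0_mx v'u) mul0mx subr0 mulmxDr -!scalemxAr.
  have Nv : nrm2 v' <= nrm2 v.
    have -> : v = 1 *: v' + t *: u by rewrite scale1r /v' subrK.
    rewrite nrm2_comb v'u nu expr1n !mul1r mulr0 addr0 mulr1.
    have := sqr_ge0 t; lra.
  rewrite vT v'T.
  apply: le_trans (nrm2_tri (x := alpha * rho) (y := 1 - alpha) (N := nrm2 v') _ _ _ _) _.
  - by apply: mulr_ge0 => //; apply: ltW.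
  - by rewrite subr_ge0 ltW.
  - rewrite nrm2Z exprMn -[X in _ <= X]mulrA; apply: ler_wpM2l; first exact: sqr_ge0.
    by apply: Sb; exact: dot0_mx.
  - rewrite nrm2Z; apply: ler_wpM2l; first exact: sqr_ge0.
    exact: proj_bound.
  - by apply: ler_wpM2l => //; apply: sqr_ge0.
have Tlb : forall k v, nrm2 (v *m mxpow T k) <= (c ^+ 2) ^+ k * nrm2 v.
  elim=> [|k IH] v; first by rewrite /mxpow /= mulmx1 expr0 mul1r.
  have -> : mxpow T k.+1 = T *m mxpow T k by [].
  rewrite mulmxA; apply: le_trans (IH _) _.
  rewrite (exprSr (c ^+ 2) k) -mulrA; apply: ler_wpM2l; last exact: Tb.
  by apply: exprn_ge0; apply: sqr_ge0.
apply: (@le_trans _ _ (\sum_y (c ^+ 2) ^+ l * (1 - u 0 y ^+ 2))).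
  apply: ler_sum => y _; rewrite rowE.
  have -> : 'e_y *m mxpow T l = ('e_y - u 0 y *: u) *m mxpow T l.
    by rewrite mulmxBl -scalemxAl uTl // scaler0 subr0.
  apply: le_trans (Tlb _ _) _; apply: ler_wpM2l; first by rewrite exprn_ge0 ?sqr_ge0.
  have ne : nrm2 ('e_y : 'rV[R]_n) = 1.
    rewrite /nrm2 (bigD1 y) //= big1 => [|x xy]; first by rewrite !mxE !eqxx /= expr1n addr0.
    by rewrite !mxE (negbTE xy) /= expr0n.
  have de : dot 'e_y u = u 0 y.
    rewrite /dot (bigD1 y) //= big1 => [|x xy]; first by rewrite !mxE !eqxx /= mul1r addr0.
    by rewrite !mxE (negbTE xy) /= mul0r.
  have -> : 'e_y - u 0 y *: u = 1 *: 'e_y + (- u 0 y) *: u by rewrite scale1r scaleNr.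
  by rewrite nrm2_comb nu ne de le_eqVlt; apply/orP; left; apply/eqP; ring.
rewrite -mulr_sumr sumrB sumr_const card_ord.
have -> : \sum_(y < n) u 0 y ^+ 2 = 1 by exact: nu.
by rewrite natrB // exprM mulrC.
Qed.
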